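(* Let $B$ be a nonzero real vector space, $\lfloor\cdot,\cdot\rfloor$ a symmetric bilinear form on $B$, $q(b):=\tfrac12\lfloor b,b\rfloor$, and let $f$ be a BC--function on $B$. Then ${\cal P}_q(f^@)={\cal P}_q(f)$.
   Context: For a proper convex $f\colon B\to\,]{-}\infty,\infty]$, $f^@(c):=\sup_{b\in B}[\lfloor b,c\rfloor-f(b)]$. A BC--function is a proper convex $f\colon B\to\,]{-}\infty,\infty]$ with $f^@(b)\ge f(b)\ge q(b)$ for all $b\in B$. For a function $h\ge q$ on $B$, ${\cal P}_q(h):=\{b\in B\colon h(b)=q(b)\}$. *)

(* Defs.v *)
From mathcomp Require Import all_boot all_order all_algebra.
From mathcomp Require Import all_classical all_reals ereal.
Set Implicit Arguments. Unset Strict Implicit. Unset Printing Implicit Defensive.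
Import Order.TTheory GRing.Theory Num.Theory.
Local Open Scope ring_scope.
Local Open Scope classical_set_scope.
Local Open Scope ereal_scope.

(* A real vector space B is an lmodType R with R : realType.
   Functions B -> ]-oo, +oo] are modelled as B -> \bar R never taking -oo. *)

Section BC.
Variables (R : realType) (B : lmodType R).

Definition sym_bilinear (bf : B -> B -> R) : Prop :=
  (forall a b, bf a b = bf b a) /\
  (forall a b c, bf (a + b)%R c = (bf a c + bf b c)%R) /\
  (forall (l : R) a c, bf (l *: a)%R c = (l * bf a c)%R).

Definition qform (bf : B -> B -> R) (b : B) : R := (bf b b / 2)%R.

Definition proper_fun (f : B -> \bar R) : Prop :=
  (forall b, f b != -oo) /\ (exists b, f b != +oo).

Definition convex_fun (f : B -> \bar R) : Prop :=
  forall (a b : B) (l : R), (0 < l < 1)%R ->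
    f (l *: a + (1 - l) *: b)%R <= (l%:E * f a + (1 - l)%:E * f b).

Definition fat (bf : B -> B -> R) (f : B -> \bar R) (c : B) : \bar R :=
  ereal_sup [set ((bf b c)%:E - f b) | b in [set: B]].

Definition BC_function (bf : B -> B -> R) (f : B -> \bar R) : Prop :=
  proper_fun f /\ convex_fun f /\
  (forall b, fat bf f b >= f b) /\ (forall b, f b >= (qform bf b)%:E).

Definition Pq (bf : B -> B -> R) (h : B -> \bar R) : set B :=
  [set b | h b = (qform bf b)%:E].

End BC.

(* Main.v *)
Require Import Defs.
From mathcomp Require Import all_boot all_order all_algebra.
From mathcomp Require Import all_classical all_reals ereal.
From mathcomp Require Import ring lra.
Import Order.TTheory GRing.Theory Num.Theory.
Local Open Scope ring_scope.

Lemma bexp (R : realType) (B : lmodType R) (bf : B -> B -> R) (c b : B) (t s : R) :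
  sym_bilinear bf ->
  bf (t *: c + s *: b) (t *: c + s *: b) = t^+2 * bf c c + 2 * t * s * bf c b + s^+2 * bf b b.
Proof.
move=> [sy [ad sc]].
have adr : forall a x y, bf a (x + y) = bf a x + bf a y.
  by move=> a x y; rewrite sy ad -!(sy a).
have scr : forall (l : R) a x, bf a (l *: x) = l * bf a x.
  by move=> l a x; rewrite sy sc sy.
rewrite !ad !adr !sc !scr (sy b c) !expr2; ring.
Qed.
Lemma real_key (R : realType) (cb bb cc fc : R) :
  (forall t : R, 0 < t < 1 ->
     (t^+2 * cc + 2 * t * (1 - t) * cb + (1-t)^+2 * bb) / 2 <= t * fc + (1 - t) * (bb / 2)) ->
  cb - fc <= bb / 2.
Proof.
move=> H.
set K := cc/2 - cb + bb/2.
have H2 : forall t, 0 < t < 1 -> cb - bb/2 - fc <= - (t * K).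
  move=> t /andP[t0 t1]; have := H t; rewrite t0 t1 => /(_ isT) h.
  have E : t * fc + (1 - t) * (bb / 2) - (t ^+ 2 * cc + 2 * t * (1 - t) * cb + (1 - t) ^+ 2 * bb) / 2
     = - (t * (cb - bb/2 - fc + t * K)) by rewrite /K !expr2; field.
  have : t * (cb - bb/2 - fc + t * K) <= 0 by rewrite -oppr_ge0 -E subr_ge0.
  rewrite pmulr_rle0 // => hh; lra.
rewrite -subr_le0; apply/negbNE/negP; rewrite -ltNge => dpos.
set d := cb - fc - bb / 2 in dpos.
have hK : 0 <= `|K| by [].
have den : 0 < 2 * (`|K| + d) by lra.
set t := d / (2 * (`|K| + d)).
have t0 : 0 < t by rewrite divr_gt0.
have t1 : t < 1 by rewrite ltr_pdivrMr //; lra.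
have := H2 t; rewrite t0 t1 => /(_ isT) h.
have tK : t * `|K| < d.
  rewrite /t mulrAC ltr_pdivrMr //; nra.
have : - (t * K) <= t * `|K| by rewrite -mulrN; apply: ler_wpM2l; [exact: ltW | rewrite -normrN; exact: ler_norm].
rewrite /d in dpos tK; lra.
Qed.

Local Open Scope ereal_scope.

Theorem lemma3p10 (R : realType) (B : lmodType R) (bf : B -> B -> R)
  (f : B -> \bar R) :
  (exists b : B, b != 0%R) ->
  sym_bilinear bf ->
  BC_function bf f ->
  Pq bf (fat bf f) = Pq bf f.
Proof.
move=> _ hs [[fninf _] [fconv [ffat fq]]].
apply/seteqP; split => b; rewrite /Pq /=.
- move=> hb; apply/le_anti; rewrite fq andbT -hb; exact: ffat.
- move=> hb; apply/le_anti; rewrite -{2}hb ffat andbT.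
  apply: ub_ereal_sup => _ [c _ <-].
  case hc: (f c) (fninf c) => [fc| |] // _.
    rewrite -EFinD lee_fin /qform.
    have h := @real_key R (bf c b) (bf b b) (bf c c) fc; apply: h.
    move=> t /andP[t0 t1].
    have := fconv c b t; rewrite t0 t1 => /(_ isT) hcv.
    have := fq (t *: c + (1 - t) *: b)%R.
    move=> /le_trans /(_ hcv). rewrite hc hb -!EFinM -EFinD lee_fin /qform bexp //.
  by rewrite addeNy leNye.
Qed.
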